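(* Let $R=(c_1,\dots,c_k)+B^\oplus$ be an atomic resimple expression. For each $j\in\{1,\dots,k\}$ let $p_j=n$ if $n\mathbf{e}_j\in B$, and $p_j=2$ if $B$ contains no element of the form $n\mathbf{e}_j$. Then the complete deterministic automaton $\mathcal{A}=\mathcal{A}_1\between\cdots\between\mathcal{A}_k$ described below accepts $\varphi^{-1}(R)$ and has exactly $\prod_{j=1}^k (c_j+p_j)$ states.
   Context: $\mathbb{N}$ includes $0$; $\mathbf{e}_j$ is the $j$-th unit vector of $\mathbb{N}^k$. For finite $B\subseteq\mathbb{N}^k$, $B^\oplus$ is the set of $\mathbb{N}$-linear combinations of elements of $B$. $B$ is free if every element of $B^\oplus$ has a unique such representation; an element is primary if it is $n\mathbf{e}_j$ with $n>0$; an atomic resimple expression is $\gamma+B^\oplus$ with $\gamma=(c_1,\dots,c_k)\in\mathbb{N}^k$ and $B$ a free basis all of whose elements are primary (so $B$ contains at most one element of the form $n\mathbf{e}_j$ for each $j$). Let $A=\{a_1,\dots,a_k\}$ and $\varphi(w)=(|w|_{a_1},\dots,|w|_{a_k})$ for $w\in A^*$. For each $j$, $\mathcal{A}_j$ is the complete deterministic automaton over the one-letter alphabet $\{a_j\}$ accepting $\{a_j^{m}: m\in S_j\}$, where $S_j=c_j+p_j\mathbb{N}$ if $p_j\mathbf{e}_j\in B$ and $S_j=\{c_j\}$ otherwise: in the first case it has states $0,1,\dots,c_j+p_j-1$, initial state $0$, transitions $i\xrightarrow{a_j}i+1$ for $i<c_j+p_j-1$ and $c_j+p_j-1\xrightarrow{a_j}c_j$,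 final state $c_j$; in the second case it has states $0,\dots,c_j$ plus a sink state, transitions $i\xrightarrow{a_j}i+1$ for $i<c_j$, $c_j\xrightarrow{a_j}$ sink, sink $\xrightarrow{a_j}$ sink, final state $c_j$. Each $\mathcal{A}_j$ is regarded as an automaton over $A$. The shuffle product of $\langle Q',A,E',I',T'\rangle$ and $\langle Q'',A,E'',I'',T''\rangle$ is $\langle Q'\times Q'',A,E,I'\times I'',T'\times T''\rangle$ with $E=\{((p',p''),a,(q',p'')):p''\in Q'',(p',a,q')\in E'\}\cup\{((p',p''),a,(p',q'')):p'\in Q',(p'',a,q'')\in E''\}$, iterated for more factors. *)

(* Defs.v *)
From HB Require Import structures.
From mathcomp Require Import all_boot.
Set Implicit Arguments. Unset Strict Implicit. Unset Printing Implicit Defensive.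

(* Vectors of N^k are functions {ffun 'I_k -> nat}; the alphabet
   A = {a_1,...,a_k} is 'I_k (letter a_j is j). *)

Definition primary_at k (j : 'I_k) (v : {ffun 'I_k -> nat}) : bool :=
  (0 < v j) && [forall i, (i != j) ==> (v i == 0)].

Definition primary k (v : {ffun 'I_k -> nat}) : Prop := exists j, primary_at j v.

(* N-linear combination of the elements of B (a finite set given as a uniq seq) *)
Definition comb k (B : seq {ffun 'I_k -> nat}) (l : 'I_(size B) -> nat) (i : 'I_k) : nat :=
  \sum_(b < size B) l b * (nth [ffun => 0] B b) i.

Definition free k (B : seq {ffun 'I_k -> nat}) : Prop :=
  uniq B /\
  forall l m : 'I_(size B) -> nat, (forall i, comb l i = comb m i) -> forall b, l b = m b.

Definition atomic_resimple k (gamma : 'I_k -> nat) (B : seq {ffun 'I_k -> nat}) : Prop :=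
  free B /\ (forall v, v \in B -> primary v).

Definition in_expr k (gamma : 'I_k -> nat) (B : seq {ffun 'I_k -> nat}) (v : 'I_k -> nat) : Prop :=
  exists l : 'I_(size B) -> nat, forall i, v i = gamma i + comb l i.

Definition phi k (w : seq 'I_k) : 'I_k -> nat := fun j => count_mem j w.

Record aut (A : finType) := Aut {
  st : finType;
  edge : st -> A -> st -> bool;
  init : pred st;
  fin : pred st }.
Arguments edge {A} a _ _ _ : rename.
Arguments init {A} a _ : rename.
Arguments fin {A} a _ : rename.

Fixpoint accept_from (A : finType) (M : aut A) (q : st M) (w : seq A) : bool :=
  match w with
  | [::] => fin M q
  | a :: w' => [exists q', edge M q a q' && @accept_from A M q' w']
  end.

Definition accepts (A : finType) (M : aut A) (w : seq A) : bool :=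
  [exists q, init M q && @accept_from A M q w].

Definition complete_deterministic (A : finType) (M : aut A) : Prop :=
  #|[pred q | init M q]| = 1 /\ forall q a, #|[pred q' | edge M q a q']| = 1.

(* The period of direction j: Some n if n e_j \in B, None otherwise *)
Definition period k (B : seq {ffun 'I_k -> nat}) (j : 'I_k) : option nat :=
  ohead [seq (v : {ffun 'I_k -> nat}) j | v <- B & primary_at j v].

Definition aut_j k (j : 'I_k) (c : nat) (per : option nat) : aut 'I_k :=
  match per with
  | Some p =>
      @Aut _ 'I_(c + p)
        (fun q a q' => (a == j) &&
           (val q' == (if val q < c + p - 1 then (val q).+1 else c)))
        (fun q => val q == 0) (fun q => val q == c)
  | None =>
      (* states 0..c, and the sink state c+1 *)
      @Aut _ 'I_(c + 2)
        (fun q a q' => (a == j) &&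
           (val q' == (if val q < c then (val q).+1 else c + 1)))
        (fun q => val q == 0) (fun q => val q == c)
  end.

Definition shuffle (A : finType) k (Ms : 'I_k -> aut A) : aut A :=
  @Aut A {dffun forall j : 'I_k, st (Ms j)}
    (fun p a q => [exists j, edge (Ms j) (p j) a (q j) &&
                             [forall i, (i != j) ==> (q i == p i)]])
    (fun p => [forall j, init (Ms j) (p j)])
    (fun p => [forall j, fin (Ms j) (p j)]).

Definition theA k (gamma : 'I_k -> nat) (B : seq {ffun 'I_k -> nat}) : aut 'I_k :=
  shuffle (fun j => aut_j j (gamma j) (period B j)).

(* Main.v *)
Require Import Defs.
From HB Require Import structures.
From mathcomp Require Import all_boot zify.
Set Implicit Arguments. Unset Strict Implicit. Unset Printing Implicit Defensive.

Section Shuf.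
Variables (k : nat) (Ms : 'I_k -> aut 'I_k).
Variables (i0 : forall j, st (Ms j)) (d : forall j, st (Ms j) -> st (Ms j)).
Hypothesis Hinit : forall j s, init (Ms j) s = (s == i0 j).
Hypothesis Hedge : forall j s a s', edge (Ms j) s a s' = (a == j) && (s' == d s).

Definition stepS (q : st (shuffle Ms)) (a : 'I_k) : st (shuffle Ms) :=
  @finfun _ (fun i => st (Ms i)) (fun i => if i == a then d (q i) else q i).

Definition q0 : st (shuffle Ms) := @finfun _ (fun i => st (Ms i)) i0.

Lemma edgeS q a q' : edge (shuffle Ms) q a q' = (q' == stepS q a).
Proof.
apply/idP/eqP => /=.
  case/existsP => j /andP [] ; rewrite Hedge => /andP [/eqP -> /eqP Hd] /forallP Ho.
  apply/ffunP => i; rewrite ffunE; case: eqP => [->|/eqP ne] //.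
  by apply/eqP; move: (Ho i); rewrite ne.
move=> ->; apply/existsP; exists a; rewrite Hedge ffunE !eqxx /=.
apply/forallP => i; apply/implyP => ne; by rewrite ffunE (negbTE ne).
Qed.

Lemma initS q : init (shuffle Ms) q = (q == q0).
Proof.
apply/forallP/eqP => [H|->] /=.
  apply/ffunP => i; rewrite ffunE; apply/eqP; by rewrite -Hinit.
by move=> j; rewrite ffunE Hinit.
Qed.

Lemma cdS : complete_deterministic (shuffle Ms).
Proof.
split.
  apply: (@eq_card1 _ q0) => q; by rewrite !inE initS.
move=> q a; apply: (@eq_card1 _ (stepS q a)) => q'; by rewrite !inE edgeS.
Qed.

Lemma acc_from q w : accept_from q w = fin (shuffle Ms) (foldl stepS q w).
Proof.
elim: w q => [|a w IH] q; first by [].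
have -> : accept_from q (a::w) = [exists q', edge (shuffle Ms) q a q' && accept_from q' w] by [].
have -> : foldl stepS q (a::w) = foldl stepS (stepS q a) w by [].
apply/existsP/idP => [[q' /andP [] ]|H].
  by rewrite edgeS => /eqP -> ; rewrite IH.
by exists (stepS q a); rewrite edgeS eqxx IH.
Qed.

Lemma foldS q w j : (foldl stepS q w) j = iter (count_mem j w) (@d j) (q j).
Proof.
elim: w q => [|a w IH] q; first by [].
have -> : foldl stepS q (a::w) = foldl stepS (stepS q a) w by [].
rewrite IH ffunE /= eq_sym; case: (a =P j) => [<-|_] /=; last by rewrite add0n.
by rewrite add0n -iterSr iterS.
Qed.

Lemma acceptsS w : accepts (shuffle Ms) w =
  [forall j, fin (Ms j) (iter (count_mem j w) (@d j) (i0 j))].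
Proof.
apply/existsP/idP => [[q /andP [] ]|H].
  rewrite initS => /eqP -> ; rewrite acc_from /=.
  move/forallP => H; apply/forallP => j; move: (H j); by rewrite foldS ffunE.
exists q0; rewrite initS eqxx acc_from /=; apply/forallP => j.
by rewrite foldS ffunE; move/forallP: H.
Qed.
End Shuf.


Definition cnt k (j : 'I_k) N (f : nat -> nat) c : aut 'I_k :=
  @Aut _ 'I_N (fun q a q' => (a == j) && (val q' == f (val q)))
    (fun q => val q == 0) (fun q => val q == c).

Lemma cnt_spec k (j : 'I_k) N f c : 0 < N -> (forall x, x < N -> f x < N) ->
  exists i0 : st (cnt j N f c), exists d : st (cnt j N f c) -> st (cnt j N f c),
   [/\ forall s, init (cnt j N f c) s = (s == i0),
       forall s a s', edge (cnt j N f c) s a s' = (a == j) && (s' == d s) &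
       forall n, fin (cnt j N f c) (iter n d i0) = (iter n f 0 == c)].
Proof.
move=> N0 fN.
exists (Ordinal N0).
exists (fun s => Ordinal (fN _ (ltn_ord s))).
split => /=.
- by move=> s; apply/eqP/eqP => [H|->] //; apply: val_inj.
- by move=> s a s'.
move=> n; congr (_ == c).
elim: n => [|n IH] //=. by rewrite IH.
Qed.

Definition fS c p n := if n < c + p - 1 then n.+1 else c.
Definition fN c n := if n < c then n.+1 else c + 1.

Lemma iter_fS c p n : 0 < p -> iter n (fS c p) 0 = if n < c then n else c + (n - c) %% p.
Proof.
move=> p0; elim: n => [|n IH] /=; first by case: c => //; rewrite sub0n mod0n.
rewrite IH /fS.
case: (ltnP n c) => Hn.
  have -> : n < c + p - 1 by lia.
  case: (ltnP n.+1 c) => Hn1 //.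
  have -> : n.+1 = c by lia.
  by rewrite subnn mod0n addn0.
have -> : (n.+1 < c) = false by lia.
rewrite subSn //.
have := ltn_pmod (n - c) p0.
have Hm : (n - c).+1 %% p = ((n - c) %% p).+1 %% p.
  by rewrite -addn1 -modnDml addn1.
rewrite Hm.
set r := (n - c) %% p => Hr.
case: (ltnP (c + r) (c + p - 1)) => H.
  rewrite modn_small; lia.
have Hr' : r.+1 = p by lia.
by rewrite Hr' modnn addn0.
Qed.

Lemma fin_fS c p n : 0 < p -> (iter n (fS c p) 0 == c) = (c <= n) && (p %| n - c).
Proof.
move=> p0; rewrite iter_fS //; case: (ltnP n c) => H /=.
  by apply/negbTE; rewrite neq_ltn H.
by rewrite -[X in _ == X](addn0 c) eqn_add2l.
Qed.

Lemma iter_fN c n : iter n (fN c) 0 = if n <= c then n else c + 1.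
Proof.
elim: n => [|n IH] //=; rewrite IH /fN.
case: (leqP n c) => H //=.
have -> : (c + 1 < c) = false by lia.
by have -> : (n < c) = false by lia.
Qed.

Lemma fin_fN c n : (iter n (fN c) 0 == c) = (n == c).
Proof.
rewrite iter_fN; case: leqP => H //.
rewrite addn1 (gtn_eqF (ltnSn c)); apply/esym/negbTE; rewrite neq_ltn H orbT //.
Qed.

Definition Sj c (per : option nat) n : bool :=
  match per with Some p => (c <= n) && (p %| n - c) | None => n == c end.

Lemma autj_spec k (j : 'I_k) c per : (forall p, per = Some p -> 0 < p) ->
  exists i0 : st (aut_j j c per), exists d : st (aut_j j c per) -> st (aut_j j c per),
   [/\ forall s, init (aut_j j c per) s = (s == i0),
       forall s a s', edge (aut_j j c per) s a s' = (a == j) && (s' == d s) &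
       forall n, fin (aut_j j c per) (iter n d i0) = Sj c per n].
Proof.
case: per => [p|] Hp.
  have p0 := Hp p erefl.
  have [|x|i0 [d [H1 H2 H3]]] := @cnt_spec k j (c + p) (fS c p) c.
  - lia.
  - rewrite /fS; case: ifP; lia.
  exists i0, d; split => // n; by rewrite H3 fin_fS.
have [|x|i0 [d [H1 H2 H3]]] := @cnt_spec k j (c + 2) (fN c) c.
- lia.
- rewrite /fN; case: ifP; lia.
exists i0, d; split => // n; by rewrite H3 fin_fN.
Qed.

Lemma card_autj k (j : 'I_k) c per :
  #|st (aut_j j c per)| = match per with Some p => c + p | None => c + 2 end.
Proof. by case: per => [p|] /=; rewrite card_ord. Qed.


Section B.
Variable k : nat.
Implicit Types (u v : {ffun 'I_k -> nat}) (B : seq {ffun 'I_k -> nat}).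

Lemma dir_uniq u i j : primary_at i u -> primary_at j u -> i = j.
Proof.
case/andP => Hi _ /andP [_ /forallP H].
apply/eqP; apply/negP => /negP ne; move: (H i); rewrite ne /=.
by move/eqP => E; rewrite E in Hi.
Qed.

Lemma prim_zero u i x : primary_at i u -> x != i -> u x = 0.
Proof. by case/andP => _ /forallP H ne; move: (H x); rewrite ne => /eqP. Qed.

Lemma coord_nz B u i : (forall v, v \in B -> primary v) -> u \in B -> u i != 0 -> primary_at i u.
Proof.
move=> HB uB nz; case: (HB u uB) => j Hj.
case: (i =P j) => [->//|/eqP ne]; by rewrite (prim_zero Hj ne) in nz.
Qed.

Definition nthB B (b : nat) := nth [ffun => 0] B b.

Lemma comb_single B (b0 : 'I_(size B)) c x :
  comb (fun b => if b == b0 then c else 0) x = c * nthB B b0 x.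
Proof.
rewrite /comb (bigD1 b0) //= eqxx big1 ?addn0 // => b /negbTE ->; by rewrite mul0n.
Qed.

Lemma prim_unique B u v i : free B -> u \in B -> v \in B ->
  primary_at i u -> primary_at i v -> u = v.
Proof.
move=> [uB Hf] uin vin Hu Hv; apply/eqP/negP => /negP ne.
have iuL : index u B < size B by rewrite index_mem.
have ivL : index v B < size B by rewrite index_mem.
pose iu := Ordinal iuL. pose iv := Ordinal ivL.
have nu : nthB B iu = u by rewrite /nthB nth_index.
have nv : nthB B iv = v by rewrite /nthB nth_index.
have Heq : forall x, comb (fun b => if b == iu then v i else 0) x =
                     comb (fun b => if b == iv then u i else 0) x.
  move=> x; rewrite !comb_single nu nv.
  case: (x =P i) => [->|/eqP nx]; first by rewrite mulnC.
  by rewrite (prim_zero Hu nx) (prim_zero Hv nx) !muln0.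
move: (Hf _ _ Heq iu); rewrite eqxx.
have -> : (iu == iv) = false.
  apply/negbTE; apply/negP => /eqP E.
  have : nth [ffun => 0] B (index u B) = nth [ffun => 0] B (index v B).
    by have /= -> := congr1 val E.
  by rewrite !nth_index // => E'; rewrite E' eqxx in ne.
by move=> E; move: Hv; rewrite /primary_at E ltnn.
Qed.

Lemma period_inv B i p : period B i = Some p ->
  exists u, [/\ u \in B, primary_at i u & u i = p].
Proof.
rewrite /period.
case E: [seq x <- B | primary_at i x] => [|u s] //= [<-].
exists u; have : u \in [seq x <- B | primary_at i x] by rewrite E mem_head.
by rewrite mem_filter => /andP [].
Qed.

Lemma period_none B i u : period B i = None -> u \in B -> ~~ primary_at i u.
Proof.
rewrite /period => E uB; apply/negP => Hu.
have : u \in [seq x <- B | primary_at i x] by rewrite mem_filter Hu.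
by case: [seq x <- B | primary_at i x] E.
Qed.

Lemma period_some B i u : free B -> u \in B -> primary_at i u -> period B i = Some (u i).
Proof.
move=> fB uB Hu; case E: (period B i) => [p|].
  by have [u' [u'B Hu' <-]] := period_inv E; rewrite (prim_unique fB u'B uB Hu' Hu).
by rewrite (negbTE (period_none E uB)) in Hu.
Qed.

Lemma nthB_in B (b : 'I_(size B)) : nthB B b \in B.
Proof. by rewrite /nthB mem_nth. Qed.

Lemma comb_none B (l : 'I_(size B) -> nat) i : (forall v, v \in B -> primary v) -> period B i = None -> comb l i = 0.
Proof.
move=> HB E; rewrite /comb big1 // => b _.
case: (nthB B b i =P 0) => [/= H|/eqP nz]; first by rewrite /nthB in H; rewrite H muln0.
by have := period_none E (nthB_in b); rewrite (coord_nz HB (nthB_in b) nz).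
Qed.

Lemma in_expr_iff (gamma : 'I_k -> nat) B (v : 'I_k -> nat) : atomic_resimple gamma B ->
  in_expr gamma B v <-> forall i, Sj (gamma i) (period B i) (v i).
Proof.
move=> [fB HB]; split.
  move=> [l Hl] i; rewrite Hl /Sj.
  case E: (period B i) => [p|]; last by rewrite comb_none // addn0.
  rewrite leq_addr addKn /= /comb; apply: dvdn_sum => b _.
  case: (nthB B b i =P 0) => [/= H|/eqP nz]; first by rewrite /nthB in H; rewrite H muln0.
  have := period_some fB (nthB_in b) (coord_nz HB (nthB_in b) nz).
  rewrite E => -[->]; exact: dvdn_mull.
move=> HS.
exists (fun b => match [pick j | primary_at j (nthB B b)] with
                 | Some j => (v j - gamma j) %/ (nthB B b j) | None => 0 end).
move=> i; move: (HS i); rewrite /Sj.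
case E: (period B i) => [p|]; last by rewrite comb_none // addn0 => /eqP.
case/andP => Hle Hdvd.
have [u [uB Hu Hup]] := period_inv E.
have iuL : index u B < size B by rewrite index_mem.
pose b0 := Ordinal iuL.
have nb0 : nthB B b0 = u by rewrite /nthB nth_index.
rewrite /comb (bigD1 b0) //= big1 ?addn0.
  rewrite /nthB !nth_index //; case: pickP => [j Hj|none]; last by move: (none i); rewrite Hu.
  rewrite -(dir_uniq Hu Hj) Hup divnK // subnKC //.
move=> b nb.
case: (nthB B b i =P 0) => [/= H|/eqP nz]; first by rewrite H muln0.
have := prim_unique fB (nthB_in b) uB (coord_nz HB (nthB_in b) nz) Hu.
rewrite -nb0 /nthB => /eqP; rewrite nth_uniq //.
  move=> /eqP E2; have E3 : b = b0 by apply: val_inj.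
  by rewrite E3 eqxx in nb.
by case: fB.
Qed.
End B.


Lemma prim_shape k (u : {ffun 'I_k -> nat}) j : primary_at j u ->
  u = [ffun i => if i == j then u j else 0].
Proof.
move=> H; apply/ffunP => i; rewrite ffunE; case: (i =P j) => [->//|/eqP ne].
exact: prim_zero H ne.
Qed.

Lemma shape_prim k (j : 'I_k) n : 0 < n -> primary_at j [ffun i => if i == j then n else 0].
Proof.
move=> n0; rewrite /primary_at ffunE eqxx n0 /=; apply/forallP => i; apply/implyP => ne.
by rewrite ffunE (negbTE ne).
Qed.

Theorem mainTheorem5 (k : nat) (gamma : 'I_k -> nat) (B : seq {ffun 'I_k -> nat})
  (p : 'I_k -> nat) :
  atomic_resimple gamma B ->
  (forall (j : 'I_k) (n : nat), 0 < n -> [ffun i => if i == j then n else 0] \in B ->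
     p j = n) ->
  (forall j : 'I_k, (forall n : nat, 0 < n -> [ffun i => if i == j then n else 0] \notin B) ->
     p j = 2) ->
  complete_deterministic (theA gamma B) /\
  (forall w : seq 'I_k, accepts (theA gamma B) w <-> in_expr gamma B (phi w)) /\
  #|st (theA gamma B)| = \prod_(j < k) (gamma j + p j).
Proof.
move=> AR Hp1 Hp2.
have Hper : forall j q, period B j = Some q -> 0 < q.
  move=> j q /period_inv [u [_ /andP [Hu _] <-]] //.
pose Ms := fun j => aut_j j (gamma j) (period B j).
have [i0 Hi0] := fin_all_exists (fun j => @autj_spec k j (gamma j) (period B j) (Hper j)).
have [d Hd] := fin_all_exists Hi0.
have Hinit : forall j s, init (Ms j) s = (s == i0 j) by move=> j; case: (Hd j).
have Hedge : forall j s a s', edge (Ms j) s a s' = (a == j) && (s' == d j s)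
  by move=> j; case: (Hd j).
have Hfin : forall j n, fin (Ms j) (iter n (d j) (i0 j)) = Sj (gamma j) (period B j) n
  by move=> j; case: (Hd j).
split; first exact: (cdS Hinit Hedge).
split.
  move=> w; rewrite (in_expr_iff _ AR) /theA -/Ms (acceptsS Hinit Hedge).
  split => [/forallP H j|H]; first by rewrite -Hfin; exact: H.
  by apply/forallP => j; rewrite Hfin; exact: H.
rewrite /theA /= card_dep_ffun /image_mem foldrE big_map big_enum /=.
apply: eq_bigr => j _; rewrite card_autj.
case E: (period B j) => [q|].
  have [u [uB Hu Huq]] := period_inv E.
  rewrite (Hp1 j q) //; first by rewrite -Huq; case/andP: Hu.
  by rewrite -Huq -(prim_shape Hu).
rewrite Hp2 // => n n0; apply/negP => Hin.
by have := period_none E Hin; rewrite shape_prim.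
Qed.
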